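(* Let $G$ be a complete bisplit graph with vertex partition $X,Y,Z$. Then the sparing number of $G$ is the product of the cardinalities of the two of these three sets having minimum cardinality.
   Context: A bisplit graph is a graph whose vertex set is partitioned into three independent sets $X,Y,Z$ such that $Y\cup Z$ induces a complete bipartite subgraph; it is a complete bisplit graph if, in addition, every vertex of $X$ is adjacent to every vertex of $Y\cup Z$ (so $G$ is a complete tripartite graph with parts $X,Y,Z$). Let $\mathbb{N}_0$ be the set of non-negative integers; for $A,B\subseteq\mathbb{N}_0$, $A+B=\{a+b:a\in A,b\in B\}$. An integer additive set-indexer (IASI) of a graph $G$ is an injective map $f:V(G)\to\mathcal{P}(\mathbb{N}_0)$ such that $f^+:E(G)\to\mathcal{P}(\mathbb{N}_0)$, $f^+(uv)=f(u)+f(v)$, is injective. A weak IASI is an IASI with $|f^+(uv)|=\max(|f(u)|,|f(v)|)$ for every edge $uv$. An edge $e$ is mono-indexed if $|f^+(e)|=1$. The sparing number $\varphi(G)$ is the minimum number of mono-indexed edges over all weak IASIs of $G$. *)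

(* Defs.v *)
From mathcomp Require Import all_boot all_order.
From mathcomp Require Import finmap.
Set Implicit Arguments.
Unset Strict Implicit.
Unset Printing Implicit Defensive.

Definition sumset (A B : {fset nat}) : {fset nat} :=
  [fset (a + b)%N | a in A, b in B]%fset.

Section Graphs.
Variable T : finType.

Definition simple_graph (e : rel T) : Prop :=
  symmetric e /\ irreflexive e.

Definition edges (e : rel T) : {set {set T}} :=
  [set E : {set T} | [exists u, exists v, e u v && (E == [set u; v])]].

Definition independent (e : rel T) (S : {set T}) : Prop :=
  forall u v, u \in S -> v \in S -> ~~ e u v.

Definition complete_bisplit (e : rel T) (X Y Z : {set T}) : Prop :=
  [/\ [&& [disjoint X & Y], [disjoint X & Z] & [disjoint Y & Z]],
      X :|: Y :|: Z = setT,
      independent e X /\ independent e Y /\ independent e Z,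
      (forall y z, y \in Y -> z \in Z -> e y z) &
      (forall x w, x \in X -> w \in Y :|: Z -> e x w)].

Definition IASI (e : rel T) (f : T -> {fset nat}) : Prop :=
  injective f /\
  forall u v u' v', e u v -> e u' v' ->
    sumset (f u) (f v) = sumset (f u') (f v') -> [set u; v] = [set u'; v'].

Definition weak_IASI (e : rel T) (f : T -> {fset nat}) : Prop :=
  IASI e f /\
  forall u v, e u v -> #|` sumset (f u) (f v)| = maxn #|` f u| #|` f v|.

Definition mono_count (e : rel T) (f : T -> {fset nat}) : nat :=
  #|[set E in edges e |
      [exists u, exists v,
        [&& E == [set u; v], e u v & #|` sumset (f u) (f v)| == 1]]]|.

Definition is_sparing_number (e : rel T) (k : nat) : Prop :=
  (exists f, weak_IASI e f /\ mono_count e f = k) /\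
  (forall f, weak_IASI e f -> k <= mono_count e f).

End Graphs.

Definition prod_two_smallest (a b c : nat) : nat :=
  let s := sort leq [:: a; b; c] in nth 0 s 0 * nth 0 s 1.

(* Main.v *)
Require Import Defs.
From mathcomp Require Import all_boot all_order.
From mathcomp Require Import finmap zify.
Open Scope fset_scope.

Lemma sumsetP A B x : reflect (exists a b, [/\ a \in A, b \in B & x = a + b]%N) (x \in sumset A B).
Proof.
apply: (iffP (imfset2P _ _ _ _ _)).
  by move=> [a aA [b bB ->]]; exists a, b.
by move=> [a [b [aA bB ->]]]; exists a => //; exists b.
Qed.

Lemma sumsetC A B : sumset A B = sumset B A.
Proof.
apply/fsetP => x; apply/sumsetP/sumsetP => -[a [b [? ? ->]]]; exists b, a; split => //; lia.
Qed.

Lemma sumset11 a b : sumset [fset a] [fset b] = [fset (a + b)%N].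
Proof.
apply/fsetP => x; rewrite in_fset1; apply/sumsetP/eqP.
  by move=> [a' [b' [] ]]; rewrite !in_fset1 => /eqP -> /eqP ->.
by move=> ->; exists a, b; rewrite !in_fset1.
Qed.

Lemma sumset12 a b : sumset [fset a] [fset b; b.+1] = [fset (a + b)%N; (a+b).+1].
Proof.
apply/fsetP => x; rewrite in_fset2; apply/sumsetP/idP.
  move=> [a' [b' [] ]]; rewrite in_fset1 in_fset2 => /eqP -> /orP[] /eqP -> ->; apply/orP; lia.
move=> /orP[] /eqP ->; [exists a, b | exists a, b.+1]; rewrite in_fset1 in_fset2 !eqxx ?orbT; split => //; lia.
Qed.

Lemma sumset0 A : sumset A fset0 = fset0.
Proof.
apply/fsetP => x; rewrite in_fset0; apply/sumsetP => -[a [b [_]]]; by rewrite in_fset0.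
Qed.

Lemma seq_max (s : seq nat) : s != [::] -> exists2 m, m \in s & forall x, x \in s -> x <= m.
Proof.
elim: s => // y [|z s] IH _.
  by exists y => [|x]; rewrite ?inE // => /eqP ->.
have [m ms mM] := IH isT.
exists (maxn y m).
  by rewrite /maxn; case: ltnP => _; rewrite inE ?eqxx ?ms ?orbT.
move=> x; rewrite in_cons => /orP[/eqP ->|/mM]; lia.
Qed.
Lemma two_elems (B : {fset nat}) : 2 <= #|` B| -> exists b1 b2, [/\ b1 \in B, b2 \in B & b1 < b2].
Proof.
move=> H.
have U := fset_uniq B.
have S : 2 <= size (enum_fset B) := H.
have mem : forall x, (x \in B) = (x \in enum_fset B) by [].
move: U S mem; case: (enum_fset B) => [|x [|y s]] //=.
rewrite inE negb_or => /andP[/andP[xy _] _] _ mem.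
have xB : x \in B by rewrite mem inE eqxx.
have yB : y \in B by rewrite mem !inE eqxx orbT.
case: (ltngtP x y) xy => // [xy|yx] _; [exists x, y | exists y, x]; by split.
Qed.

Lemma sumset_big (A B : {fset nat}) : A != fset0 -> 2 <= #|` B| -> #|` A| < #|` sumset A B|.
Proof.
move=> An0 /two_elems [b1 [b2 [b1B b2B b12]]].
have [M MA MM] : exists2 M, M \in A & forall x, x \in A -> x <= M.
  apply: seq_max; apply: contra An0 => /eqP E; apply/eqP/fsetP => x.
  by rewrite in_fset0; apply/negbTE; rewrite -[x \in A]/(x \in enum_fset A) E.
set T' := [fset (a + b1)%N | a in A].
have cT : #|` T'| = #|` A|.
  rewrite card_imfset //=; by move=> x y /addIn.
have sub : (M + b2)%N |` T' `<=` sumset A B.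
  apply/fsubsetP => x; rewrite in_fset1U => /orP[/eqP ->|].
    by apply/sumsetP; exists M, b2.
  move=> /imfsetP [a aA ->]; apply/sumsetP; by exists a, b1.
have := fsubset_leq_card sub; rewrite cardfsU1 cT.
have -> : (M + b2)%N \notin T'.
  apply/imfsetP => -[a aA E]; have := MM _ aA; lia.
by [].
Qed.

Lemma weak_one (T : finType) (e : rel T) f u v :
  simple_graph e -> weak_IASI e f -> e u v -> #|` f u| = 1 \/ #|` f v| = 1.
Proof.
move=> [esym eirr] [[finj _] W] euv.
have Wuv := W u v euv.
have nuv : u != v by apply: contraTneq euv => ->; rewrite eirr.
case Ea: #|` f u| => [|[|a]]; case Eb: #|` f v| => [|[|b]]; auto; exfalso.
- have := finj u v; rewrite (cardfs0_eq Ea) (cardfs0_eq Eb) => H.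
  by move/eqP: nuv; apply; apply: H.
- move: Wuv; rewrite Eb (cardfs0_eq Ea) sumsetC sumset0 cardfs0; lia.
- move: Wuv; rewrite Ea (cardfs0_eq Eb) sumset0 cardfs0; lia.
- have h1 := @sumset_big (f u) (f v).
  have h2 := @sumset_big (f v) (f u).
  rewrite sumsetC in h2.
  have nu : f u != fset0 by rewrite -cardfs_eq0 Ea.
  have nv : f v != fset0 by rewrite -cardfs_eq0 Eb.
  move: (h1 nu) (h2 nv); rewrite Ea Eb Wuv Ea Eb => H1 H2.
  have := H1 isT; have := H2 isT; lia.
Qed.
Lemma pts a b c : prod_two_smallest a b c = if (a <= c) && (b <= c) then a * b else if a <= b then a * c else b * c.
Proof.
rewrite /prod_two_smallest /sort /=.
case: (leqP a b) => h1; case: (leqP b c) => h2; case: (leqP a c) => h3;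
  rewrite /= ?h1 ?h2 ?h3 ?(leqNgt a b) ?(leqNgt b c) ?(leqNgt a c) ?(leqNgt b a) ?(leqNgt c b) ?(leqNgt c a) ?h1 ?h2 ?h3 /=; try lia.
Qed.

Close Scope fset_scope.
Lemma pow2_lt i j k l : i < j -> k < l -> 2^i+2^j = 2^k+2^l -> i = k /\ j = l.
Proof.
move=> ij kl E.
have bnd : forall a b, a < b -> 2^b <= 2^a + 2^b < 2^b.+1.
  move=> a b ab; have h : 2^a < 2^b by rewrite ltn_exp2l.
  rewrite expnS; move: h; set x := 2^a; set y := 2^b; lia.
have jl : j = l.
  case: (ltngtP j l) => // h; exfalso.
    have h2 : 2^j.+1 <= 2^l by rewrite leq_exp2l.
    have := bnd _ _ ij; have := bnd _ _ kl; move: E h2; set x := 2^j.+1; lia.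
  have h2 : 2^l.+1 <= 2^j by rewrite leq_exp2l.
  have := bnd _ _ ij; have := bnd _ _ kl; move: E h2; set x := 2^l.+1; lia.
subst l; split => //; apply: (@expnI 2) => //; move: E; lia.
Qed.

Lemma pow2_eq i j k l : i != j -> k != l -> 2^i+2^j = 2^k+2^l -> (i = k /\ j = l) \/ (i = l /\ j = k).
Proof.
move=> ij kl E.
case: (ltngtP i j) ij => // h1 _; case: (ltngtP k l) kl => // h2 _.
- by left; apply: pow2_lt.
- by right; case: (pow2_lt _ _ _ _ h1 h2 _) => //; rewrite E addnC.
- by right; case: (pow2_lt _ _ _ _ h1 h2 _) => //; rewrite addnC E.
- by left; case: (pow2_lt _ _ _ _ h1 h2 _) => //; rewrite addnC E addnC.
Qed.

Section G.
Local Close Scope fset_scope.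
Variable T : finType.
Variable e : rel T.

Definition cross (A B : {set T}) := forall a b, a \in A -> b \in B -> e a b.

Definition tri (P Q R : {set T}) :=
  [/\ [&& [disjoint P & Q], [disjoint P & R] & [disjoint Q & R]],
      P :|: Q :|: R = setT,
      independent e P /\ independent e Q /\ independent e R,
      cross P Q /\ cross P R & cross Q R].

Hypothesis esym : symmetric e.
Hypothesis eirr : irreflexive e.

Lemma cross_sym (A B : {set T}) : cross A B -> cross B A.
Proof. by move=> H a b aB bA; rewrite esym; apply: H. Qed.

Lemma tri_swap12 (P Q R : {set T}) : tri P Q R -> tri Q P R.
Proof.
case=> /and3P[d1 d2 d3] cov [i1 [i2 i3]] [c1 c2] c3; split.
- by rewrite disjoint_sym d1 d2 d3.
- by rewrite (setUC Q P).
- by [].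
- by split => //; apply: cross_sym.
- by [].
Qed.

Lemma tri_swap23 (P Q R : {set T}) : tri P Q R -> tri P R Q.
Proof.
case=> /and3P[d1 d2 d3] cov [i1 [i2 i3]] [c1 c2] c3; split.
- by rewrite d2 d1 disjoint_sym d3.
- by rewrite -setUA (setUC R Q) setUA.
- by [].
- by [].
- by apply: cross_sym.
Qed.

Definition g (p : T * T) : {set T} := [set p.1; p.2].

Lemma g_inj (Q R : {set T}) : [disjoint Q & R] -> {in finset.setX Q R &, injective g}.
Proof.
move=> dQR [q r] [q' r']; rewrite !finset.in_setX /g /= => /andP[qQ rR] /andP[q'Q r'R] E.
have qin : q \in [set q'; r'] by rewrite -E set21.
have rin : r \in [set q'; r'] by rewrite -E set22.
have nQR : forall x, x \in Q -> x \in R -> False.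
  by move=> x xQ xR; move/disjointFr: dQR => /(_ x xQ); rewrite xR.
move: qin rin; rewrite !inE => /orP[/eqP->|/eqP qr] /orP[/eqP rq|/eqP->] //.
- by exfalso; apply: (nQR r); rewrite // rq.
- by exfalso; apply: (nQR q); rewrite // qr.
- by exfalso; apply: (nQR q); rewrite // qr.
Qed.

Definition monoset f := [set E in edges e |
      [exists u, exists v,
        [&& E == [set u; v], e u v & #|` sumset (f u) (f v)| == 1]]].

Lemma img_sub (P Q R : {set T}) f : tri P Q R -> (forall v, v \in Q :|: R -> #|` f v| = 1) ->
  g @: finset.setX Q R \subset monoset f.
Proof.
case=> _ _ _ _ c3 H; apply/subsetP => E /imsetP [[q r]]; rewrite finset.in_setX /g /= => /andP[qQ rR] ->.
have eqr := c3 _ _ qQ rR.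
rewrite inE; apply/andP; split.
  by rewrite inE; apply/existsP; exists q; apply/existsP; exists r; rewrite eqr eqxx.
apply/existsP; exists q; apply/existsP; exists r; rewrite eqxx eqr /=.
have /cardfs1P [x ->] : #|` f q| == 1 by rewrite H // inE qQ.
have /cardfs1P [y ->] : #|` f r| == 1 by rewrite H // inE rR orbT.
by rewrite sumset11 cardfs1.
Qed.

Lemma card_img (P Q R : {set T}) : tri P Q R -> #|g @: finset.setX Q R| = #|Q| * #|R|.
Proof.
case=> /and3P[_ _ d3] _ _ _ _.
by rewrite card_in_imset ?cardsX //; apply: g_inj.
Qed.

Lemma mono_ge (P Q R : {set T}) f : tri P Q R -> (forall v, v \in Q :|: R -> #|` f v| = 1) ->
  #|Q| * #|R| <= mono_count e f.
Proof.
move=> t H; rewrite -(@card_img P Q R t); exact: subset_leq_card (@img_sub P Q R f t H).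
Qed.

Lemma parts (P Q R : {set T}) v : tri P Q R -> [\/ v \in P, v \in Q | v \in R].
Proof.
case=> _ cov _ _ _; have : v \in P :|: Q :|: R by rewrite cov inE.
by rewrite !inE => /orP[/orP[]|] H; [apply: Or31|apply: Or32|apply: Or33].
Qed.

Lemma lower (P Q R : {set T}) f : tri P Q R -> weak_IASI e f ->
  [\/ #|Q| * #|R| <= mono_count e f, #|P| * #|R| <= mono_count e f | #|P| * #|Q| <= mono_count e f].
Proof.
move=> t W.
have sg : simple_graph e by [].
have t' := t; case: t' => _ _ _ [c1 c2] c3.
case: (boolP [forall v, (v \in Q :|: R) ==> (#|` f v| == 1)]) => [/forallP H|].
  apply: Or31; apply: mono_ge t _ => v vQR; exact/eqP/(implyP (H v)).
rewrite negb_forall => /existsP [w]; rewrite negb_imply => /andP[]; rewrite inE => /orP[] wX /eqP fw.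
- apply: Or32; apply: (mono_ge _ _ _ _ (tri_swap12 _ _ _ t)) => v; rewrite inE => /orP[] vX.
  + by case: (@weak_one _ _ _ _ _ sg W (c1 _ _ vX wX)).
  + by case: (@weak_one _ _ _ _ _ sg W (c3 _ _ wX vX)).
- apply: Or33; apply: (mono_ge _ _ _ _ (tri_swap12 _ _ _ (tri_swap23 _ _ _ t))) => v; rewrite inE => /orP[] vX.
  + by case: (@weak_one _ _ _ _ _ sg W (c2 _ _ vX wX)).
  + by case: (@weak_one _ _ _ _ _ sg W (c3 _ _ vX wX)).
Qed.

Lemma construct (P Q R : {set T}) : tri P Q R ->
  exists f, weak_IASI e f /\ mono_count e f = #|Q| * #|R|.
Proof.
move=> t; have t' := t; case: t' => /and3P[d1 d2 d3] cov [iP [iQ iR]] [c1 c2] c3.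
pose r (v : T) : nat := enum_rank v.
have rinj : injective r by move=> u v /val_inj /enum_rank_inj.
pose f v := if v \in P then [fset 2^r v; (2^r v).+1]%fset else [fset 2^r v]%fset.
have noPP : forall u v, e u v -> ~~ ((u \in P) && (v \in P)).
  by move=> u v euv; apply/negP => /andP[uP vP]; move: (iP _ _ uP vP); rewrite euv.
pose s u v := (2^r u + 2^r v)%N.
have sumE : forall u v, e u v -> sumset (f u) (f v) =
    if (u \in P) || (v \in P) then [fset s u v; (s u v).+1]%fset else [fset s u v]%fset.
  move=> u v euv; have := noPP _ _ euv; rewrite /f /s; case: (u \in P); case: (v \in P) => //= _.
  - by rewrite sumsetC sumset12 addnC.
  - by rewrite sumset12.
  - by rewrite sumset11.
have c2ne : forall x : nat, (x != x.+1) by move=> x; lia.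
have cardE : forall u v, e u v -> #|` sumset (f u) (f v)| = if (u \in P) || (v \in P) then 2 else 1.
  by move=> u v euv; rewrite sumE //; case: ifP => _; rewrite ?cardfs2 ?c2ne ?cardfs1.
have cardf : forall v, #|` f v| = if v \in P then 2 else 1.
  by move=> v; rewrite /f; case: ifP => _; rewrite ?cardfs2 ?c2ne ?cardfs1.
have memf : forall v x, x \in f v -> 2^r v <= x <= (2^r v).+1.
  move=> v x; rewrite /f; case: ifP => _; [rewrite in_fset2 => /orP[] /eqP -> | rewrite in_fset1 => /eqP ->]; lia.
have memS : forall u v, e u v -> s u v \in sumset (f u) (f v) /\
    forall x, x \in sumset (f u) (f v) -> s u v <= x <= (s u v).+1.
  move=> u v euv; rewrite sumE //; case: ifP => _; rewrite ?in_fset2 ?in_fset1 eqxx //; split => // x;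
  [rewrite in_fset2 => /orP[] /eqP -> | rewrite in_fset1 => /eqP ->]; lia.
exists f; split; [split; [split|] | ].
- move=> u v E.
  have h1 : 2^r u \in f v by rewrite -E /f; case: ifP => _; rewrite ?in_fset2 ?in_fset1 eqxx.
  have h2 : 2^r v \in f u by rewrite E /f; case: ifP => _; rewrite ?in_fset2 ?in_fset1 eqxx.
  move: (memf _ _ h1) (memf _ _ h2) => m1 m2.
  apply: rinj; apply: (@expnI 2) => //; move: m1 m2; set a := 2 ^ r u; set b := 2 ^ r v; lia.
- move=> u v u' v' e1 e2 E.
  have [m1 b1] := memS _ _ e1; have [m2 b2] := memS _ _ e2.
  rewrite E in m1; rewrite -E in m2.
  have := b2 _ m1; have := b1 _ m2; move=> h1 h2.
  have Es : s u v = s u' v' by move: h1 h2; lia.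
  have nuv : r u != r v by apply: contraTneq e1 => /rinj ->; rewrite eirr.
  have nuv' : r u' != r v' by apply: contraTneq e2 => /rinj ->; rewrite eirr.
  case: (pow2_eq _ _ _ _ nuv nuv' Es) => -[/rinj -> /rinj ->] //.
  by rewrite /= setUC.
- move=> u v euv; rewrite cardE // !cardf; have := noPP _ _ euv.
  by case: (u \in P); case: (v \in P).
- have -> : mono_count e f = #|monoset f| by [].
  rewrite -(@card_img P Q R t).
  suff -> : monoset f = g @: finset.setX Q R by [].
  apply/eqP; rewrite eqEsubset; apply/andP; split; last first.
    apply: (img_sub _ _ _ _ t) => v; rewrite inE cardf => /orP[] vX.
      by case: ifP => // vP; move/disjointFr: d1 => /(_ v vP); rewrite vX.
    by case: ifP => // vP; move/disjointFr: d2 => /(_ v vP); rewrite vX.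
  apply/subsetP => E; rewrite inE => /andP[_ /existsP [u /existsP [v /and3P[/eqP -> euv]]]].
  rewrite cardE //; case: ifP => // /negbT; rewrite negb_or => /andP[uP vP] _.
  case: (parts _ _ _ u t) uP => [->|uX|uX] // _; case: (parts _ _ _ v t) vP => [->|vX|vX] // _.
  + by move: (iQ _ _ uX vX); rewrite euv.
  + by apply/imsetP; exists (u, v); rewrite // finset.in_setX uX vX.
  + by apply/imsetP; exists (v, u); rewrite ?finset.in_setX ?uX ?vX // /g /= setUC.
  + by move: (iR _ _ uX vX); rewrite euv.
Qed.

End G.

Lemma pts_le a b c : [/\ prod_two_smallest a b c <= b * c,
  prod_two_smallest a b c <= a * c & prod_two_smallest a b c <= a * b].
Proof.
rewrite pts; case: (leqP a c) => h1; case: (leqP b c) => h2; case: (leqP a b) => h3 /=;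
  split; nia.
Qed.


Theorem proposition2p9 (T : finType) (e : rel T) (X Y Z : {set T}) :
  simple_graph e -> complete_bisplit e X Y Z ->
  is_sparing_number e (prod_two_smallest #|X| #|Y| #|Z|).
Proof.
move=> [esym eirr] [dis cov [iX [iY iZ]] cYZ cX].
have t : @tri _ e X Y Z.
  split => //; try by split.
  split.
  - by move=> x y xX yY; apply: cX; rewrite // inE yY.
  - by move=> x y xX yY; apply: cX; rewrite // inE yY orbT.
have [le1 le2 le3] := pts_le #|X| #|Y| #|Z|.
split.
  have := pts #|X| #|Y| #|Z|; case: ifP => _; [|case: ifP => _] => ->.
  - exact: (construct _ _ eirr _ _ _ (tri_swap12 _ _ esym _ _ _ (tri_swap23 _ _ esym _ _ _ t))).
  - exact: (construct _ _ eirr _ _ _ (tri_swap12 _ _ esym _ _ _ t)).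
  - exact: (construct _ _ eirr _ _ _ t).
move=> f W.
case: (lower _ _ esym eirr _ _ _ _ t W) => h; exact: leq_trans h.
Qed.
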